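(* If there is a polynomial-time algorithm solving the $(\alpha_S,\alpha_D)$-shortcut approximation problem, then there is a polynomial-time algorithm solving the $(\alpha_S+1,\alpha_D)$-TC-spanner approximation problem.
   Context: Graphs: $G=(V,E)$ is a directed unweighted graph; distances count edges; the diameter of a graph is the maximum distance over all reachable ordered pairs. The transitive closure of $G$ is $G^T=(V,E^T)$ with $(u,v)\in E^T$ iff $u$ can reach $v$ in $G$. TC spanner: a set $E'\subseteq E^T$ such that $(V,E')$ has the same transitive closure as $G$; it is an $(s,d)$-TC spanner if $|E'|\le s$ and $(V,E')$ has diameter at most $d$. Shortcut: a set $E'\subseteq E^T\setminus E$; it is an $(s,d)$-shortcut if $|E'|\le s$ and $(V,E\cup E')$ has diameter at most $d$. The $(\alpha_S,\alpha_D)$-shortcut approximation problem: given a directed graph $G$ and integers $d,s$ such that $G$ admits an $(s,d)$-shortcut, find an $(\alpha_S s,\alpha_D d)$-shortcut of $G$. The $(\alpha_S,\alpha_D)$-TC-spanner approximation problem: given $G$ and integers $d,s$ such that $G$ admits an $(s,d)$-TC spanner, find an $(\alpha_S s,\alpha_D d)$-TC spanner of $G$. *)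

(* Defs.v *)
From HB Require Import structures.
From mathcomp Require Import all_boot all_order all_algebra.
From mathcomp Require Import reals.
Set Implicit Arguments. Unset Strict Implicit. Unset Printing Implicit Defensive.
Import Order.TTheory GRing.Theory Num.Theory.

Definition edges (n : nat) := {set 'I_n * 'I_n}.

Definition erel (n : nat) (E : edges n) : rel 'I_n := fun u v => (u, v) \in E.

Definition reach1 (n : nat) (E : edges n) (u v : 'I_n) : bool :=
  [exists w, erel E u w && connect (erel E) w v].

Definition tclosure (n : nat) (E : edges n) : edges n :=
  [set p | reach1 E p.1 p.2].

(* (V,F) has diameter at most r : every reachable ordered pair (u,v)
   (including u = v, at distance 0) is joined by a path with at most r
   edges. r is real so that approximation factors may be real. *)
Definition diam_le (R : realType) (n : nat) (F : edges n) (r : R) : Prop :=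
  forall u v : 'I_n, connect (erel F) u v ->
    exists p : seq 'I_n,
      [/\ path (erel F) u p, last u p = v & ((size p)%:R <= r)%R].

Definition is_tc_spanner (n : nat) (E E' : edges n) : Prop :=
  E' \subset tclosure E /\ tclosure E' = tclosure E.

Definition is_tcsp (R : realType) (n : nat) (E E' : edges n) (s d : R) : Prop :=
  [/\ is_tc_spanner E E', ((#|E'|)%:R <= s)%R & diam_le E' d].

Definition is_shortcut (n : nat) (E H : edges n) : Prop :=
  H \subset tclosure E :\: E.

Definition is_sc (R : realType) (n : nat) (E H : edges n) (s d : R) : Prop :=
  [/\ is_shortcut E H, ((#|H|)%:R <= s)%R & diam_le (E :|: H) d].

Record inst := Inst { inn : nat; inE : edges inn; ind : nat; ins : nat }.

Definition alg := forall I : inst, edges (inn I).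

Definition solves_shortcut_approx (R : realType) (aS aD : nat -> R) (A : alg) :=
  forall I : inst,
    (exists H : edges (inn I), is_sc (inE I) H ((ins I)%:R : R) ((ind I)%:R : R)) ->
    is_sc (inE I) (A I) (aS (inn I) * (ins I)%:R) (aD (inn I) * (ind I)%:R).

Definition solves_tcsp_approx (R : realType) (aS aD : nat -> R) (A : alg) :=
  forall I : inst,
    (exists E' : edges (inn I), is_tcsp (inE I) E' ((ins I)%:R : R) ((ind I)%:R : R)) ->
    is_tcsp (inE I) (A I) (aS (inn I) * (ins I)%:R) (aD (inn I) * (ind I)%:R).

(* We do not fix a machine model; instead the theorem is stated for    *)
(* EVERY class of algorithms satisfying the following closure          *)
(* properties, all of which hold for the class of polynomial-time      *)
(* computable functions (with the standard encoding of an instance:    *)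
(* n, the edge list, and d, s in binary).                              *)

(* First-order formulas over a graph, with atoms for edges, for
   reachability (transitive closure), the linear order on 'I_n and
   equality; variables are de Bruijn indices. *)
Inductive form :=
| FE of nat & nat
| FR of nat & nat
| FLt of nat & nat
| FEq of nat & nat
| FNot of form
| FAnd of form & form
| FEx of form.

Definition atom2 (n : nat) (r : rel 'I_n) (env : seq 'I_n) (i j : nat) : bool :=
  match onth env i, onth env j with
  | Some x, Some y => r x y
  | _, _ => false
  end.

Fixpoint feval (n : nat) (E : edges n) (env : seq 'I_n) (f : form) : bool :=
  match f with
  | FE i j => atom2 (erel E) env i j
  | FR i j => atom2 (reach1 E) env i j
  | FLt i j => atom2 (fun x y : 'I_n => (x < y)%N) env i j
  | FEq i j => atom2 (fun x y : 'I_n => x == y) env i j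
  | FNot g => ~~ feval E env g
  | FAnd g h => feval E env g && feval E env h
  | FEx g => [exists x : 'I_n, feval E (x :: env) g]
  end.

(* the edge set defined by a formula with two free variables (0 = tail, 1 = head) *)
Definition fo_alg (f : form) : alg :=
  fun I => [set p | feval (inE I) [:: p.1; p.2] f].

Definition poly_closed (Poly : alg -> Prop) : Prop :=
  [/\
      forall f : form, Poly (fo_alg f),
      forall A F : alg, Poly A -> Poly F ->
        Poly (fun I => A (Inst (F I) (ind I) (ins I)))
    &
      forall A B : alg, Poly A -> Poly B -> Poly (fun I => A I :|: B I)].

(* Main.v *)
Require Import Defs.
From HB Require Import structures.
From mathcomp Require Import all_boot all_order all_algebra.
From mathcomp Require Import reals.
Import Order.TTheory GRing.Theory Num.Theory.
Set Implicit Arguments. Unset Strict Implicit. Unset Printing Implicit Defensive.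

Lemma reach1_connect n (E : edges n) u v : reach1 E u v -> connect (erel E) u v.
Proof. by case/existsP=> w /andP[h1 h2]; apply: connect_trans (connect1 h1) h2. Qed.

Lemma reach1_edge n (E: edges n) u v : erel E u v -> reach1 E u v.
Proof. by move=> h; apply/existsP; exists v; rewrite h connect0. Qed.

Lemma reach1_connectr n (E: edges n) u w v :
  reach1 E u w -> connect (erel E) w v -> reach1 E u v.
Proof.
case/existsP=> x /andP[h1 h2] h3; apply/existsP; exists x; rewrite h1 /=.
exact: connect_trans h2 h3.
Qed.

Lemma connect_neq_reach1 n (E: edges n) u v :
  connect (erel E) u v -> u != v -> reach1 E u v.
Proof.
case/connectP=> [[|w p]] /= ; first by move=> _ ->; rewrite eqxx.
move=> /andP[h1 h2] -> _; apply/existsP; exists w; rewrite h1 /=.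
by apply/connectP; exists p.
Qed.

Lemma reach1_trans n (E: edges n) u w v :
  reach1 E u w -> reach1 E w v -> reach1 E u v.
Proof. by move=> h1 h2; apply: reach1_connectr h1 (reach1_connect h2). Qed.

Lemma connect_reach1 n (E: edges n) u w v :
  connect (erel E) u w -> reach1 E w v -> reach1 E u v.
Proof.
move=> h1 h2; case: (eqVneq u w) => [-> //| ne].
exact: reach1_trans (connect_neq_reach1 h1 ne) h2.
Qed.

Definition FS i j := FAnd (FR i j) (FR j i).
Definition For a b := FNot (FAnd (FNot a) (FNot b)).
Definition Fea := FAnd (FS 0 1) (For (FAnd (FLt 0 1) (FNot (FEx (FAnd (FAnd (FS 1 0) (FLt 1 0)) (FLt 0 2)))))
   (FAnd (FNot (FEx (FAnd (FS 1 0) (FLt 1 0)))) (FNot (FEx (FAnd (FS 1 0) (FLt 0 2)))))).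
Definition Feb := FAnd (FAnd (FAnd (FAnd (FNot (FEx (FAnd (FS 1 0) (FLt 0 1))))
   (FNot (FEx (FAnd (FS 2 0) (FLt 0 2))))) (FR 0 1)) (FNot (FR 1 0)))
   (FNot (FEx (FAnd (FAnd (FAnd (FR 1 0) (FR 0 2)) (FNot (FR 0 1))) (FNot (FR 2 0))))).
Definition F0 := For Fea Feb.

Definition Sr n (r : rel 'I_n) u v := r u v && r v u.
Definition ea n (r : rel 'I_n) (u v : 'I_n) :=
  Sr r u v && (((u < v)%N && ~~ [exists w, Sr r u w && (u < w)%N && (w < v)%N])
      || (~~ [exists w, Sr r u w && (u < w)%N] && ~~ [exists w, Sr r u w && (w < v)%N])).
Definition minc n (r : rel 'I_n) u := ~~ [exists w, Sr r u w && (w < u)%N].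
Definition eb n (r : rel 'I_n) (u v : 'I_n) :=
  [&& minc r u, minc r v, r u v, ~~ r v u &
      ~~ [exists w, r u w && r w v && ~~ r w u && ~~ r v w]].
Definition e0 n (r : rel 'I_n) u v := ea r u v || eb r u v.
Definition E0set n (r : rel 'I_n) : edges n := [set p | e0 r p.1 p.2].

Lemma feval_F0 n (E : edges n) u v : feval E [:: u; v] F0 = e0 (reach1 E) u v.
Proof.
rewrite /F0 /For /= /atom2 /= /e0 /ea /eb /minc /Sr.
rewrite ?negb_and ?negb_or ?negbK ?andbA.
congr (_ && _ || _ && _).
by rewrite -negb_or negbK.
Qed.

Lemma fo_F0 (I0 : inst) : fo_alg F0 I0 = E0set (reach1 (Defs.inE I0)).
Proof. by apply/setP=> p; rewrite !inE feval_F0. Qed.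


Definition transr n (r : rel 'I_n) := forall x y z, r x y -> r y z -> r x z.

Lemma Sr_sym n (r : rel 'I_n) x y : Sr r x y -> Sr r y x.
Proof. by rewrite /Sr andbC. Qed.

Lemma Sr_trans n (r : rel 'I_n) : transr r -> forall x y z, Sr r x y -> Sr r y z -> Sr r x z.
Proof.
move=> tr x y z /andP[h1 h2] /andP[h3 h4]; apply/andP; split.
  exact: tr h1 h3.
exact: tr h4 h2.
Qed.

Lemma Sr_refl n (r : rel 'I_n) : transr r -> forall x y, Sr r x y -> Sr r x x.
Proof. by move=> tr x y h; apply: Sr_trans tr _ _ _ h (Sr_sym h). Qed.

Lemma erelE0 n (r : rel 'I_n) u v : erel (E0set r) u v = e0 r u v.
Proof. by rewrite /erel /E0set inE. Qed.

Lemma L1 n (r : rel 'I_n) : transr r -> forall x y, Sr r x y -> (x <= y)%N ->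
  connect (erel (E0set r)) x y.
Proof.
move=> tr x y; have [k] := ubnP (y - x); elim: k x => // k IH x hk Sxy.
rewrite leq_eqVlt => /orP[/eqP/val_inj -> | ltxy]; first exact: connect0.
have Py : (fun z : 'I_n => Sr r x z && (x < z)%N) y by rewrite Sxy ltxy.
case: (@arg_minnP _ y (fun z : 'I_n => Sr r x z && (x < z)%N) (fun z : 'I_n => val z) Py) => m /andP[Sxm ltxm] minm.
have edge : erel (E0set r) x m.
  rewrite erelE0; apply/orP; left; rewrite /ea Sxm /=; apply/orP; left.
  rewrite ltxm /=; apply/existsPn => z; apply/negP => /andP[/andP[Sxz xz] zm].
  by have := minm z; rewrite Sxz xz => /(_ isT); apply/negP; rewrite -ltnNge; exact: zm.
have my : (m <= y)%N by exact: minm.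
apply: connect_trans (connect1 edge) _; apply: IH.
- by apply: leq_trans (ltn_sub2l ltxy ltxm) _; rewrite -ltnS.
- exact: Sr_trans tr _ _ _ (Sr_sym Sxm) Sxy.
- exact: my.
Qed.

Lemma L2 n (r : rel 'I_n) : transr r -> forall x y, Sr r x y ->
  reach1 (E0set r) x y.
Proof.
move=> tr x y Sxy; have Sxx := Sr_refl tr Sxy.
case: (@arg_maxnP _ x (Sr r x) (fun z : 'I_n => val z) Sxx) => M SxM maxM.
case: (@arg_minnP _ x (Sr r x) (fun z : 'I_n => val z) Sxx) => m Sxm minm.
have edge : erel (E0set r) M m.
  rewrite erelE0; apply/orP; left; rewrite /ea.
  rewrite (Sr_trans tr (Sr_sym SxM) Sxm) /=; apply/orP; right.
  apply/andP; split; apply/existsPn => z; apply/negP => /andP[SMz zz].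
    have Sxz := Sr_trans tr SxM SMz.
    by have := maxM z Sxz; apply/negP; rewrite -ltnNge; exact: zz.
  have Sxz := Sr_trans tr SxM SMz.
  by have := minm z Sxz; apply/negP; rewrite -ltnNge; exact: zz.
have c1 := L1 tr SxM (maxM x Sxx).
apply: connect_reach1 c1 _.
apply: reach1_connectr (reach1_edge edge) _.
have my : (m <= y)%N := minm y Sxy.
have S2 := Sr_trans tr (Sr_sym Sxm) Sxy.
exact: (L1 tr S2 my).
Qed.

Definition eqv n (r : rel 'I_n) a c := (c == a) || Sr r a c.

Lemma cls n (r : rel 'I_n) : transr r -> forall a, exists c, eqv r a c && minc r c.
Proof.
move=> tr a; case: (pickP (Sr r a)) => [w Saw | none].
  case: (@arg_minnP _ w (Sr r a) (fun z : 'I_n => val z) Saw) => c Sac minm.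
  exists c; rewrite /eqv Sac orbT /=; apply/existsPn => z; apply/negP => /andP[Scz zc].
  by have := minm z (Sr_trans tr Sac Scz); apply/negP; rewrite -ltnNge; exact: zc.
exists a; rewrite /eqv eqxx /=; apply/existsPn => z; by rewrite none.
Qed.

Lemma eqv_rl n (r : rel 'I_n) a c x : transr r -> eqv r a c -> r a x -> r c x.
Proof. by move=> tr /orP[/eqP -> // | /andP[_ h]] h2; apply: tr h h2. Qed.
Lemma eqv_rr n (r : rel 'I_n) a c x : transr r -> eqv r a c -> r x a -> r x c.
Proof. by move=> tr /orP[/eqP -> // | /andP[h _]] h2; apply: tr h2 h. Qed.
Lemma eqv_rl' n (r : rel 'I_n) a c x : transr r -> eqv r a c -> r c x -> r a x.
Proof. by move=> tr /orP[/eqP -> // | /andP[h _]] h2; apply: tr h h2. Qed.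
Lemma eqv_rr' n (r : rel 'I_n) a c x : transr r -> eqv r a c -> r x c -> r x a.
Proof. by move=> tr /orP[/eqP -> // | /andP[_ h]] h2; apply: tr h2 h. Qed.

Definition Iv n (r : rel 'I_n) a b := [set z | ((z == a) || r a z) && ((z == b) || r z b)].

Lemma Isub n (r : rel 'I_n) a b a' b' : transr r ->
  (a' == a) || r a a' -> (b' == b) || r b' b -> Iv r a' b' \subset Iv r a b.
Proof.
move=> tr ha hb; apply/subsetP => z; rewrite !inE => /andP[h1 h2].
apply/andP; split.
  case/orP: h1 => [/eqP -> // | h1]; case/orP: ha => [/eqP <- | ha]; first by rewrite h1 orbT.
  by rewrite (tr _ _ _ ha h1) orbT.
case/orP: h2 => [/eqP -> // | h2]; case/orP: hb => [/eqP <- | hb]; first by rewrite h2 orbT.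
by rewrite (tr _ _ _ h2 hb) orbT.
Qed.

Lemma DAG n (r : rel 'I_n) : transr r -> forall N a b, (#|Iv r a b| < N)%N ->
  r a b -> ~~ r b a -> connect (erel (E0set r)) a b.
Proof.
move=> tr; elim=> // N IH a b hN rab nrba.
have [ca /andP[hca mca]] := cls tr a; have [cb /andP[hcb mcb]] := cls tr b.
have c1 : connect (erel (E0set r)) a ca.
  case/orP: hca => [/eqP -> | h]; first exact: connect0.
  exact: reach1_connect (L2 tr h).
have c2 : connect (erel (E0set r)) cb b.
  case/orP: hcb => [/eqP -> | h]; first exact: connect0.
  exact: reach1_connect (L2 tr (Sr_sym h)).
have rc : r ca cb by apply: eqv_rl tr hca (eqv_rr tr hcb rab).
have nrc : ~~ r cb ca.
  by apply/negP => h; move/negP: nrba; apply; apply: eqv_rl' tr hcb (eqv_rr' tr hca h).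
have sub : Iv r ca cb \subset Iv r a b.
  apply: Isub tr _ _.
    by case/orP: hca => [-> // | /andP[h _]]; rewrite h orbT.
  by case/orP: hcb => [-> // | /andP[_ h]]; rewrite h orbT.
have hN' : (#|Iv r ca cb| <= N)%N by apply: leq_trans (subset_leq_card sub) _.
apply: connect_trans c1 _; apply: connect_trans _ c2.
case: (boolP [exists w, r ca w && r w cb && ~~ r w ca && ~~ r cb w]).
  case/existsP => w /andP[/andP[/andP[h1 h2] h3] h4].
  apply: connect_trans (_ : connect _ ca w) _.
    apply: IH => //; apply: leq_trans _ hN'; apply: proper_card; apply/properP; split.
      by apply: Isub tr _ _; rewrite ?eqxx ?h2 ?orbT.
    exists cb; first by rewrite inE rc eqxx !orbT.
    rewrite inE negb_and; apply/orP; right; rewrite negb_or h4 andbT.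
    by apply/eqP => e; move: h2 h4; rewrite e => ->.
  apply: IH => //; apply: leq_trans _ hN'; apply: proper_card; apply/properP; split.
    by apply: Isub tr _ _; rewrite ?eqxx ?h1 ?orbT.
  exists ca; first by rewrite inE rc eqxx !orbT.
  rewrite inE negb_and; apply/orP; left; rewrite negb_or h3 andbT.
  by apply/eqP => e; move: h1 h3; rewrite e => ->.
move=> ncov; apply: connect1; rewrite erelE0; apply/orP; right.
by rewrite /eb mca mcb rc nrc ncov.
Qed.

Lemma e0_r n (r : rel 'I_n) u v : e0 r u v -> r u v.
Proof. by case/orP => [/andP[/andP[h _] _] | /and5P[_ _ h _ _]]. Qed.

Lemma connect_r n (F : edges n) (r : rel 'I_n) : transr r ->
  (forall x y, erel F x y -> r x y) ->
  forall w v, connect (erel F) w v -> (w == v) || r w v.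
Proof.
move=> tr hF w v /connectP[p]; elim: p w => [|x p IH] w /=.
  by move=> _ ->; rewrite eqxx.
move=> /andP[h1 h2] e; have := IH x h2 e; case/orP => [/eqP <- | h].
  by rewrite hF ?orbT.
by rewrite (tr _ _ _ (hF _ _ h1) h) orbT.
Qed.

Lemma reach_E0 n (r : rel 'I_n) : transr r -> forall u v, reach1 (E0set r) u v = r u v.
Proof.
move=> tr u v; apply/idP/idP.
  case/existsP => w /andP[h1 h2]; rewrite erelE0 in h1; have ruw := e0_r h1.
  have := connect_r tr (fun x y h => e0_r (eq_ind _ _ h _ (erelE0 r x y))) h2.
  by case/orP => [/eqP <- // | h]; apply: tr ruw h.
move=> ruv; case: (boolP (r v u)) => rvu.
  have S : Sr r u v by rewrite /Sr ruv rvu.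
  exact (L2 tr S).
apply: connect_neq_reach1.
  exact: (DAG tr (N := #|Iv r u v|.+1) (ltnSn _) ruv rvu).
by apply/eqP => e; move: ruv rvu; rewrite e => ->.
Qed.

Lemma split_path (T : finType) (e : rel T) (P : pred T) x p :
  path e x p -> P x -> ~~ P (last x p) ->
  exists a b, [/\ e a b, P a, ~~ P b, connect e x a & connect e b (last x p)].
Proof.
elim: p x => [|y p IH] x /=; first by move=> _ ->.
move=> /andP[exy py] Px nPl; case: (boolP (P y)) => Py.
  have [a [b [h1 h2 h3 h4 h5]]] := IH y py Py nPl.
  exists a, b; split; [exact: h1 | exact: h2 | exact: h3 | | exact: h5].
  exact: connect_trans (connect1 exy) h4.
exists x, y; split; [exact: exy | exact: Px | exact: Py | exact: connect0 | ].
by apply/connectP; exists p.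
Qed.

Lemma ea_nlt n (r : rel 'I_n) u v v' : ea r u v -> ea r u v' -> ~~ (v < v')%N.
Proof.
move=> /andP[Suv h] /andP[Suv' h']; apply/negP => vv'.
case/orP: h' => [/andP[uv' /existsPn nz] | /andP[/existsPn nz1 /existsPn nz2]].
  case/orP: h => [/andP[uv _] | /andP[/existsPn nz1 _]].
    by move: (nz v); rewrite Suv uv vv'.
  by move: (nz1 v'); rewrite Suv' uv'.
by move: (nz2 v); rewrite Suv vv'.
Qed.

Lemma ea_uniq n (r : rel 'I_n) u v v' : ea r u v -> ea r u v' -> v = v'.
Proof.
move=> h h'; apply: val_inj; apply/eqP; rewrite eqn_leq.
by rewrite leqNgt (ea_nlt h' h) leqNgt (ea_nlt h h').
Qed.

Lemma eqv_minc n (r : rel 'I_n) a b c : transr r ->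
  eqv r a c -> eqv r b c -> minc r a -> minc r b -> a = b.
Proof.
move=> tr ha hb ma mb.
have hab : (a == b) || Sr r a b.
  case/orP: ha => [/eqP ea | Sac]; case/orP: hb => [/eqP eb | Sbc].
  - by rewrite -ea -eb eqxx.
  - by rewrite -ea Sr_sym ?orbT.
  - by rewrite -eb Sac orbT.
  - by rewrite (Sr_trans tr Sac (Sr_sym Sbc)) orbT.
case/orP: hab => [/eqP // | Sab].
apply: val_inj; apply/eqP; rewrite eqn_leq.
move/existsPn: ma => /(_ b); rewrite Sab /= -leqNgt => ->.
by move/existsPn: mb => /(_ a); rewrite (Sr_sym Sab) /= -leqNgt.
Qed.

Lemma e0_ea n (r : rel 'I_n) u v : Sr r u v -> e0 r u v -> ea r u v.
Proof.
move=> /andP[_ rvu] /orP[// | /and5P[_ _ _ h _]]; by rewrite rvu in h.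
Qed.

Lemma e0_eb n (r : rel 'I_n) u v : ~~ Sr r u v -> e0 r u v -> eb r u v.
Proof. by move=> S /orP[/andP[S' _] | //]; rewrite S' in S. Qed.

Lemma card_E0 n (E E' : edges n) : tclosure E' = tclosure E ->
  (#|E0set (reach1 E)| <= #|E'|)%N.
Proof.
move=> htc.
have tr : transr (reach1 E) by move=> x y z; apply: reach1_trans.
have hr : forall x y, reach1 E' x y = reach1 E x y.
  by move=> x y; have := congr1 (fun S : edges n => (x, y) \in S) htc; rewrite !inE.
set r := reach1 E in tr hr *.
pose Q (p q : 'I_n * 'I_n) := if Sr r p.1 p.2 then (q.1 == p.1) && Sr r q.1 q.2
   else [&& eqv r p.1 q.1, eqv r p.2 q.2 & ~~ r q.2 q.1].
have ex : forall p, p \in E0set r -> exists2 q, q \in E' & Q p q.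
  case=> u v; rewrite inE /= => he; rewrite /Q /=.
  case: (boolP (Sr r u v)) => S.
    have := S; case/andP => ruv rvu.
    rewrite -hr in ruv; case/existsP: ruv => w /andP[h1 h2].
    exists (u, w); first exact: h1.
    rewrite /= eqxx /Sr -!hr (reach1_edge h1) /=.
    by apply: connect_reach1 h2 _; rewrite hr.
  case/and5P: (e0_eb S he) => mu mv ruv nrvu ncov.
  have cuv : connect (erel E') u v by apply: reach1_connect; rewrite hr.
  case/connectP: cuv => p pp lp.
  have Pu : eqv r u u by rewrite /eqv eqxx.
  have nPv : ~~ eqv r u (last u p).
    rewrite -lp /eqv negb_or (negbTE S) andbT; apply/eqP => e.
    by move: ruv nrvu; rewrite e => ->.
  have [a [b [hab Pa nPb cua cbv]]] := split_path pp Pu nPv.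
  rewrite -lp in cbv.
  exists (a, b); first exact: hab.
  have rub : r u b by rewrite -hr; apply: connect_reach1 cua (reach1_edge hab).
  rewrite /= Pa /=; apply/andP; split.
    case: (eqVneq b v) => [-> | nbv]; first by rewrite /eqv eqxx.
    have rbv : r b v by rewrite -hr; apply: connect_neq_reach1.
    move/existsPn: ncov => /(_ b); rewrite rub rbv /= negb_and !negbK.
    case/orP => [rbu | rvb]; last by rewrite /eqv /Sr rvb rbv orbT.
    by move: nPb; rewrite /eqv /Sr rub rbu orbT.
  apply/negP => rba; have rbu : r b u := eqv_rr' tr Pa rba.
  by move: nPb; rewrite /eqv /Sr rub rbu orbT.
pose g p := odflt p [pick q in E' | Q p q].
have gP : forall p, p \in E0set r -> g p \in E' /\ Q p (g p).
  move=> p hp; rewrite /g; case: pickP => [q /andP[h1 h2] | none] //=.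
  have [q h1 h2] := ex p hp; by move: (none q); rewrite h1 h2.
have inj : {in E0set r &, injective g}.
  move=> [u v] [u' v'] hp hp' e.
  have [_ Q1] := gP _ hp; have [_ Q2] := gP _ hp'.
  rewrite e in Q1; move: Q1 Q2; rewrite /Q /=.
  have he := hp; have he' := hp'; rewrite inE /= in he; rewrite inE /= in he'.
  case: (boolP (Sr r u v)) => S; case: (boolP (Sr r u' v')) => S'.
  - move=> /andP[/eqP e1 _] /andP[/eqP e2 _].
    have uu : u = u' := etrans (esym e1) e2.
    rewrite -uu in he' S' *.
    by rewrite (ea_uniq (e0_ea S he) (e0_ea S' he')).
  - by move=> /andP[_ /andP[_ Sq]] /and3P[_ _ nr]; rewrite Sq in nr.
  - by move=> /and3P[_ _ nr] /andP[_ /andP[_ Sq]]; rewrite Sq in nr.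
  - move=> /and3P[a1 a2 _] /and3P[b1 b2 _].
    case/and5P: (e0_eb S he) => mu mv _ _ _.
    case/and5P: (e0_eb S' he') => mu' mv' _ _ _.
    by rewrite (eqv_minc tr a1 b1 mu mu') (eqv_minc tr a2 b2 mv mv').
rewrite -(card_in_imset inj); apply: subset_leq_card; apply/subsetP => q /imsetP[p hp ->].
by case: (gP p hp).
Qed.

Lemma self_tcl n (G : edges n) : G \subset tclosure G.
Proof. by apply/subsetP => -[u v] h; rewrite inE /=; apply: reach1_edge. Qed.

Lemma connect_mono n (F G : edges n) u v : F \subset tclosure G ->
  connect (erel F) u v -> connect (erel G) u v.
Proof.
move/subsetP=> h; apply: connect_sub => x y hxy.
by apply: reach1_connect; have := h (x, y) hxy; rewrite inE.
Qed.

Lemma tcl_sub n (F G : edges n) : F \subset tclosure G -> tclosure F \subset tclosure G.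
Proof.
move=> hs; have h := subsetP hs.
apply/subsetP => -[u v]; rewrite !inE /= => /existsP[w /andP[h1 h2]].
have r1 : reach1 G u w by have := h (u, w) h1; rewrite inE.
exact: reach1_connectr r1 (connect_mono hs h2).
Qed.

Lemma tcl_mono n (F G : edges n) : F \subset G -> tclosure F \subset tclosure G.
Proof. by move=> hs; apply: tcl_sub; apply: subset_trans hs (self_tcl G). Qed.

Theorem lemma2p5 (R : realType) (aS aD : nat -> R) (Poly : alg -> Prop) :
  poly_closed Poly ->
  (exists A : alg, Poly A /\ solves_shortcut_approx aS aD A) ->
  exists B : alg, Poly B /\ solves_tcsp_approx (fun n => aS n + 1)%R aD B.
Proof.
case=> hfo hcomp hunion [A [PA solA]].
pose F := fo_alg F0.
pose C := fun I => A (Inst (F I) (ind I) (ins I)).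
exists (fun I => F I :|: C I); split.
  exact: (hunion F C (hfo F0) (hcomp A F PA (hfo F0))).
move=> I [E' [[Esub Etc] cardE' diamE']].
rewrite /C /F fo_F0.
set E := Defs.inE I in Esub Etc *.
have tr : transr (reach1 E) by move=> x y z; apply: reach1_trans.
have c0 : (#|E0set (reach1 E)| <= #|E'|)%N by apply: card_E0.
set E0 := E0set (reach1 E) in c0 *.
have tc0 : tclosure E0 = tclosure E.
  by apply/setP => -[u v]; rewrite !inE /= reach_E0.
set I0 := Inst E0 (ind I) (ins I).
have hsc : exists H, is_sc (Defs.inE I0) H ((ins I0)%:R : R) ((ind I0)%:R : R).
  exists (E' :\: E0); split.
  - rewrite /is_shortcut; apply/subsetP => p; rewrite !in_setD; case/andP => np pE'.
    by rewrite np /= tc0; exact: (subsetP Esub p pE').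
  - apply: le_trans cardE'; rewrite ler_nat; apply: subset_leq_card; exact: subsetDl.
  - move=> u v huv.
    have cuv : connect (erel E') u v.
      apply: connect_mono huv; apply/subsetP => p; rewrite in_setU in_setD.
      case/orP => [h | /andP[_ h]].
        by rewrite Etc -tc0; exact: (subsetP (self_tcl E0) p h).
      exact: (subsetP (self_tcl E') p h).
    case: (diamE' u v cuv) => p [pp lp sz]; exists p; split=> //.
    apply: sub_path pp => x y; rewrite /erel in_setU in_setD => h.
    by rewrite h andbT orbN.
have [HS HC HD] := solA I0 hsc.
rewrite /=.
set H' := A I0 in HS HC HD *.
have Hsub : E0 :|: H' \subset tclosure E.
  apply/subsetP => p; rewrite in_setU => /orP[h | h].
    by rewrite -tc0; exact: (subsetP (self_tcl E0) p h).
  by have := subsetP HS p h; rewrite in_setD tc0 => /andP[_].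
split.
- split => //; apply/eqP; rewrite eqEsubset; apply/andP; split.
    exact: tcl_sub.
  by rewrite -tc0; apply: tcl_mono; exact: subsetUl.
- have hU : (#|E0 :|: H'| <= #|E0| + #|H'|)%N by case: (leq_card_setU E0 H').
  apply: le_trans (_ : ((#|E0| + #|H'|)%:R <= _)%R).
    by rewrite ler_nat.
  rewrite natrD mulrDl mul1r addrC; apply: lerD; first exact: HC.
  apply: le_trans cardE'; by rewrite ler_nat.
- exact: HD.
Qed.
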